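(* If two proper metric spaces $(X,d_X)$ and $(Y,d_Y)$ are coarsely equivalent, then their coarse Freudenthal coronas $CF(X)\setminus X$ and $CF(Y)\setminus Y$ are homeomorphic.
   Context: A map $f:X\to Y$ between metric spaces is coarse if $f^{-1}(K)$ is bounded for every bounded $K\subset Y$, and large scale continuous if for each $m\ge0$ there is $M>0$ with $d_X(x,y)<m\Rightarrow d_Y(f(x),f(y))<M$. Maps $f,g:X\to Y$ are close if $\sup_x d_Y(f(x),g(x))<\infty$. $X$ and $Y$ are coarsely equivalent if there are coarse, large scale continuous maps $f:X\to Y$, $g:Y\to X$ with $g\circ f$ close to $\mathrm{id}_X$ and $f\circ g$ close to $\mathrm{id}_Y$ (the maps need not be continuous). A glacial scale on $X$ is a sequence $\mathcal S=\{(K_i,n_i)\}_{i\ge1}$, $K_i$ bounded subsets, $n_i$ natural numbers, such that for every bounded $K$ and $r>0$ there is $i$ with $K\subset K_i$, $n_i>r$; an $\mathcal S$-chain is a finite sequence $x_1,\dots,x_n$ with, for each $i\le n-1$, some $m$ such that $x_i,x_{i+1}\notin K_m$ and $d(x_i,x_{i+1})\le n_m$; $f:X\to\mathbb R$ is glacially oscillating if for every $\epsilon>0$ there is a glacial scale $\mathcal S$ with $|f(x_1)-f(x_n)|<\epsilon$ for all $\mathcal S$-chains. The coarse Freudenthal compactification $CF(X)$ of a proper metric space $X$ is the compactification induced by all continuous glacially oscillating functions $X\to[0,1]$ (each such function extends continuously over $CF(X)$, and restrictions to $X$ of continuous functions on $CF(X)$ are glacially oscillating). *)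

(* Defs.v *)
From HB Require Import structures.
From mathcomp Require Import all_boot all_order all_algebra.
From mathcomp Require Import all_classical all_reals all_analysis.
Set Implicit Arguments. Unset Strict Implicit. Unset Printing Implicit Defensive.
Import Order.TTheory GRing.Theory Num.Theory.
Import numFieldTopology.Exports numFieldNormedType.Exports.
Local Open Scope classical_set_scope.
Local Open Scope ring_scope.

Section coarse.
Variable R : realType.

Definition mbounded (X : metricType R) (K : set X) : Prop :=
  exists r : R, forall x y, K x -> K y -> mdist x y <= r.

Definition proper_metric (X : metricType R) : Prop :=
  forall (x : X) (r : R), compact [set y | mdist x y <= r].

Definition coarse_map (X Y : metricType R) (f : X -> Y) : Prop :=
  forall K : set Y, mbounded K -> mbounded (f @^-1` K).

Definition ls_continuous (X Y : metricType R) (f : X -> Y) : Prop :=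
  forall m : R, 0 <= m -> exists2 M : R, 0 < M &
    forall x y : X, mdist x y < m -> mdist (f x) (f y) < M.

Definition close_maps (X Y : metricType R) (f g : X -> Y) : Prop :=
  exists C : R, forall x, mdist (f x) (g x) <= C.

Definition coarsely_equivalent (X Y : metricType R) : Prop :=
  exists (f : X -> Y) (g : Y -> X),
    [/\ coarse_map f, ls_continuous f, coarse_map g & ls_continuous g] /\
    close_maps (g \o f) idfun /\ close_maps (f \o g) idfun.

(* A glacial scale: a sequence (K_i, n_i)_{i >= 1} (indexed here from 0). *)
Definition glacial_scale (X : metricType R) (K : nat -> set X) (n : nat -> nat)
  : Prop :=
  (forall i, mbounded (K i)) /\
  forall (B : set X) (r : R), mbounded B -> 0 < r ->
    exists i, B `<=` K i /\ r < (n i)%:R.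

Definition scale_step (X : metricType R) (K : nat -> set X) (n : nat -> nat)
  (x y : X) : Prop :=
  exists m, ~ K m x /\ ~ K m y /\ mdist x y <= (n m)%:R.

(* The sequence x :: s is an S-chain. *)
Fixpoint scale_chain (X : metricType R) (K : nat -> set X) (n : nat -> nat)
  (x : X) (s : seq X) : Prop :=
  match s with
  | [::] => True
  | y :: s' => scale_step K n x y /\ scale_chain K n y s'
  end.

Definition glacially_oscillating (X : metricType R) (f : X -> R) : Prop :=
  forall eps : R, 0 < eps -> exists (K : nat -> set X) (n : nat -> nat),
    glacial_scale K n /\
    forall (x : X) (s : seq X), scale_chain K n x s ->
      `|f x - f (last x s)| < eps.

Definition cgo_fun (X : metricType R) (f : X -> R) : Prop :=
  continuous f /\ (forall x, 0 <= f x <= 1) /\ glacially_oscillating f.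

Definition CGO (X : metricType R) := {f : X -> R | cgo_fun f}.

Definition cf_embed (X : metricType R) (x : X) : {ptws CGO X -> R} :=
  fun f => proj1_sig f x.

Definition CF (X : metricType R) : set {ptws CGO X -> R} :=
  closure (range (@cf_embed X)).

Definition CF_corona (X : metricType R) : set {ptws CGO X -> R} :=
  @CF X `\` range (@cf_embed X).

End coarse.
Arguments CF {R} X.
Arguments CF_corona {R} X.

Definition homeomorphic_sets (T U : topologicalType) (A : set T) (B : set U)
  : Prop :=
  exists (f : T -> U) (g : U -> T),
    [/\ f @` A `<=` B, g @` B `<=` A,
        {in A, cancel f g} & {in B, cancel g f}] /\
    {within A, continuous f} /\ {within B, continuous g}.

(* Main.v *)
Require Import Defs.
From HB Require Import structures.
From mathcomp Require Import all_boot all_order all_algebra.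
From mathcomp Require Import all_classical all_reals all_analysis.
From mathcomp Require Import lra.
Import numFieldTopology.Exports numFieldNormedType.Exports.
Import Order.TTheory GRing.Theory Num.Theory.
Local Open Scope classical_set_scope.
Local Open Scope ring_scope.
Set Implicit Arguments. Unset Strict Implicit.

Section helpers.
Variable R : realType.

Lemma bounded_ballP (X : metricType R) (z : X) (A : set X) :
  mbounded A <-> exists r : R, forall x, A x -> mdist z x <= r.
Proof.
split.
  move=> [r Hr].
  have [[a Aa]|A0] := pselect (exists a, A a); last first.
    by exists 0 => x Ax; exfalso; apply: A0; exists x.
  exists (mdist z a + r) => x Ax.
  apply: (le_trans (metric_triangle z a x)); by rewrite lerD2l Hr.
move=> [r Hr]; exists (r + r) => x y Ax Ay.
apply: (le_trans (metric_triangle x z y)); rewrite metric_sym.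
by apply: lerD; apply: Hr.
Qed.

Lemma mbounded0 (X : metricType R) : mbounded (@set0 X).
Proof. by exists 0. Qed.

Lemma mboundedS (X : metricType R) (A B : set X) :
  A `<=` B -> mbounded B -> mbounded A.
Proof. by move=> AB [r Hr]; exists r => x y /AB Ax /AB Ay; apply: Hr. Qed.

Lemma mboundedU (X : metricType R) (A B : set X) :
  mbounded A -> mbounded B -> mbounded (A `|` B).
Proof.
move=> bA bB.
have [[z _]|E] := pselect (exists z, (A `|` B) z); last first.
  by exists 0 => x y Ux; exfalso; apply: E; exists x.
have [rA HA] := (bounded_ballP z A).1 bA.
have [rB HB] := (bounded_ballP z B).1 bB.
apply/(bounded_ballP z); exists (Num.max rA rB) => x [/HA|/HB] h;
  rewrite le_max h ?orbT //.
Qed.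

Lemma coarse_comp (X Y Z : metricType R) (f : X -> Y) (g : Y -> Z) :
  coarse_map f -> coarse_map g -> coarse_map (g \o f).
Proof. by move=> cf cg K bK; exact: (cf _ (cg _ bK)). Qed.

Lemma ls_bounded (X Y : metricType R) (f : X -> Y) (B : set X) :
  ls_continuous f -> mbounded B -> mbounded (f @` B).
Proof.
move=> lf [b Hb].
have hb : 0 <= Num.max b 0 + 1 by rewrite addr_ge0 // le_max lexx orbT.
have [M M0 HM] := lf _ hb.
exists M => _ _ [x Bx <-] [y By <-]; apply/ltW/HM.
apply: (le_lt_trans (Hb _ _ Bx By)).
have : b <= Num.max b 0 by rewrite le_max lexx.
lra.
Qed.

Definition asym (X : metricType R) (a b : X -> R) :=
  forall e : R, 0 < e -> mbounded [set x | e <= `|a x - b x|].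

Lemma asym_sym (X : metricType R) (a b : X -> R) : asym a b -> asym b a.
Proof.
move=> H e e0; apply: mboundedS (H e e0) => x /=; by rewrite distrC.
Qed.

Lemma asym_trans (X : metricType R) (a b c : X -> R) :
  asym a b -> asym b c -> asym a c.
Proof.
move=> H1 H2 e e0; have e20 : 0 < e / 2 by rewrite divr_gt0.
apply: mboundedS (mboundedU (H1 _ e20) (H2 _ e20)) => x /= h.
case: (leP (e / 2) `|a x - b x|) => h1; first by left.
right; rewrite leNgt; apply/negP => h2.
have := ler_distD (b x) (a x) (c x); lra.
Qed.

Lemma asym_comp (X Y : metricType R) (f : X -> Y) (a b : Y -> R) :
  coarse_map f -> asym a b -> asym (a \o f) (b \o f).
Proof. by move=> cf H e e0; exact: (cf _ (H _ e0)). Qed.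

Lemma asym_cvg (X : metricType R) (F : set_system X) (a b : X -> R) (l : R) :
  Filter F -> (forall B, mbounded B -> F (~` B)) ->
  asym a b -> a @ F --> l -> b @ F --> l.
Proof.
move=> FF Fc H /cvgrPdist_lt al; apply/cvgrPdist_lt => e e0.
have e20 : 0 < e / 2 by rewrite divr_gt0.
have F1 := al _ e20; have F2 := Fc _ (H _ e20).
apply: filterS2 F1 F2 => x h1 /negP; rewrite -ltNge => h2.
have := ler_distD (a x) l (b x); lra.
Qed.

End helpers.

Section go.
Variable R : realType.

Lemma chain_mono (X : metricType R) (K K' : nat -> set X) (n : nat -> nat) x s :
  (forall m, K m `<=` K' m) -> scale_chain K' n x s -> scale_chain K n x s.
Proof.
move=> KK; elim: s x => [//|y s IH] x /= [[m [h1 [h2 h3]]] hc]; split; last exact: IH.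
by exists m; split; [move=> /KK|split; [move=> /KK|]].
Qed.

Lemma chain_ends (X : metricType R) (K : nat -> set X) (n : nat -> nat) x y s :
  scale_chain K n x (y :: s) ->
  (exists m, ~ K m x) /\ (exists m, ~ K m (last y s)).
Proof.
elim: s x y => [|z s IH] x y /=.
  by move=> [[m [h1 [h2 _]]] _]; split; exists m.
move=> [[m [h1 _]] hc]; split; first by exists m.
by have [_ ?] := IH _ _ hc.
Qed.

Lemma go_asym (X : metricType R) (u h : X -> R) :
  glacially_oscillating u -> asym h u -> glacially_oscillating h.
Proof.
move=> gu ahu e e0; have e30 : 0 < e / 3 by rewrite divr_gt0.
have [K [n [[Kb Ks] Kc]]] := gu _ e30.
pose B := [set x | e / 3 <= `|h x - u x|].
have bB : mbounded B := ahu _ e30.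
exists (fun i => K i `|` B), n; split.
  split; first by move=> i; apply: mboundedU.
  move=> B0 r bB0 r0; have [i [h1 h2]] := Ks _ _ bB0 r0.
  by exists i; split => // x /h1; left.
move=> x [|y s] hc /=; first by rewrite subrr normr0.
have [[m1 hm1] [m2 hm2]] := chain_ends hc.
have hc' : scale_chain K n x (y :: s).
  by apply: chain_mono hc => m z Kz; left.
have := Kc _ _ hc'; rewrite /=.
have hx : ~ B x by move=> Bx; apply: hm1; right.
have hl : ~ B (last y s) by move=> Bx; apply: hm2; right.
move: hx hl; rewrite /B /= => /negP; rewrite -ltNge => hx /negP; rewrite -ltNge => hl hu.
have := ler_distD (u x) (h x) (h (last y s)).
have := ler_distD (u (last y s)) (u x) (h (last y s)).
rewrite (distrC (h (last y s))) in hl.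
lra.
Qed.

Lemma go_comp (X Y : metricType R) (f : X -> Y) (phi : Y -> R) :
  coarse_map f -> ls_continuous f -> glacially_oscillating phi ->
  glacially_oscillating (phi \o f).
Proof.
move=> cf lf gp e e0.
have [K [n [[Kb Ks] Kc]]] := gp _ e0.
pose P j k := forall x y : X, mdist x y <= k%:R -> mdist (f x) (f y) <= (n j)%:R.
have P0 : forall j, P j 0%N.
  move=> j x y hxy.
  have -> : x = y.
    by apply: mdist_positivity; apply/le_anti; rewrite hxy mdist_ge0.
  by rewrite mdistxx.
pose n' j := (\max_(k < (n j).+1 | `[< P j k >]) k)%N.
have Pn' : forall j, P j (n' j).
  move=> j; rewrite /n'; apply: (big_ind (P j)) => //.
    by move=> a b Pa Pb; rewrite /maxn; case: ifP.
  by move=> k /asboolP.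
exists (fun j => f @^-1` K j), n'; split.
  split; first by move=> j; apply: cf.
  move=> B r bB r0.
  have r0' : 0 <= r by apply: ltW.
  pose k := Num.bound r.
  have rk : r < k%:R := archi_boundP r0'.
  have hk1 : 0 <= k%:R + 1 :> R by rewrite addr_ge0.
  have [M M0 HM] := lf _ hk1.
  have Mk0 : 0 < Num.max M k%:R by rewrite lt_max M0.
  have [j [hj1 hj2]] := Ks _ _ (ls_bounded lf bB) Mk0.
  exists j; split; first by move=> x Bx; apply: hj1; exists x.
  have Pjk : P j k.
    move=> x y hxy; apply/ltW; apply: (lt_trans (HM _ _ _)).
      by apply: (le_lt_trans hxy); rewrite ltrDl.
    by apply: le_lt_trans hj2; rewrite le_max lexx.
  have kn : (k < (n j).+1)%N.
    rewrite ltnS -(ler_nat R); apply/ltW/(le_lt_trans _ hj2).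
    by rewrite le_max lexx orbT.
  have hkn := @leq_bigmax_cond _ (fun i : 'I_(n j).+1 => `[< P j i >])
     (fun i : 'I_(n j).+1 => nat_of_ord i) (Ordinal kn) (asboolT Pjk).
  rewrite /= in hkn.
  by apply: (lt_le_trans rk); rewrite ler_nat.
move=> x s hc.
have hc' : scale_chain K n (f x) (map f s).
  elim: s x hc => [//|y s IH] x /= [[m [h1 [h2 h3]]] hc]; split; last exact: IH.
  by exists m; split => //; split => //; apply: Pn'.
by have := Kc _ _ hc'; rewrite last_map.
Qed.

Lemma close_asym (X : metricType R) (psi : X -> R) (k : X -> X) :
  glacially_oscillating psi -> coarse_map k ->
  close_maps k idfun -> asym (psi \o k) psi.
Proof.
move=> gp ck [C HC] e e0.
have [K [n [[Kb Ks] Kc]]] := gp _ e0.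
have r0 : 0 < Num.max C 0 + 1 by rewrite ltr_wpDl // le_max lexx orbT.
have [i [_ hi]] := Ks _ _ (@mbounded0 _ X) r0.
apply: mboundedS (mboundedU (Kb i) (ck _ (Kb i))) => x /= hx.
have [?|h1] := pselect (K i x); first by left.
have [?|h2] := pselect (K i (k x)); first by right.
exfalso.
have hc : scale_chain K n x [:: k x].
  split => //; exists i; split => //; split => //.
  rewrite metric_sym; apply: (le_trans (HC x)); apply/ltW/(lt_trans _ hi).
  have : C <= Num.max C 0 by rewrite le_max lexx.
  lra.
have := Kc _ _ hc; rewrite /= distrC => h; move: hx; rewrite leNgt h.
by [].
Qed.

Lemma scale_exists (X : metricType R) (z : X) :
  exists K : nat -> set X, exists n : nat -> nat, glacial_scale K n.
Proof.
exists (fun i => [set y | mdist z y <= i%:R]), id; split.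
  by move=> i; apply/(bounded_ballP z); exists i%:R.
move=> B r bB r0; have [rB HB] := (bounded_ballP z B).1 bB.
have m0 : 0 <= Num.max rB r by rewrite le_max (ltW r0) orbT.
have hb := archi_boundP m0.
exists (Num.bound (Num.max rB r)); split.
  move=> x Bx /=; apply: (le_trans (HB _ Bx)); apply/ltW/(le_lt_trans _ hb).
  by rewrite le_max lexx.
by apply: le_lt_trans hb; rewrite le_max lexx orbT.
Qed.

Lemma go_cst (X : metricType R) (z : X) (c : R) :
  glacially_oscillating (fun _ : X => c).
Proof.
move=> e e0; have [K [n hK]] := scale_exists z.
by exists K, n; split => // x s _; rewrite subrr normr0.
Qed.

End go.

Section approx.
Variable R : realType.

Lemma lip_continuous (X : metricType R) (h : X -> R) :
  (forall x y, `|h x - h y| <= mdist x y) -> continuous h.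
Proof.
move=> Hl x; apply/cvgrPdist_lt => e e0.
near=> t.
have : ball x e t by near: t; exact: nbhsx_ballx.
rewrite ballEmdist /= => ht.
exact: le_lt_trans (Hl x t) ht.
Unshelve. all: by end_near.
Qed.

Lemma approx (X : metricType R) (u : X -> R) :
  (forall x, 0 <= u x <= 1) -> glacially_oscillating u ->
  exists h : CGO X, asym (proj1_sig h) u.
Proof.
move=> ub gu.
pose E x := [set t | exists y, t = u y - mdist x y].
have En : forall x, E x !=set0.
  by move=> x; exists (u x - mdist x x); exists x.
have Eub : forall x, ubound (E x) 1.
  move=> x _ [y ->]; have := ub y; have := mdist_ge0 x y.
  move=> h1 /andP[h2 h3]; lra.
have Es : forall x, has_sup (E x).
  by move=> x; split; [exact: En|exists 1; exact: Eub].
pose hs x := sup (E x).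
have hu : forall x, u x <= hs x.
  move=> x; have Ex : E x (u x - mdist x x) by exists x.
  by have := sup_upper_bound (Es x) Ex; rewrite mdistxx subr0.
have h1 : forall x, hs x <= 1 by move=> x; apply: ge_sup.
have hl : forall x x', hs x <= hs x' + mdist x x'.
  move=> x x'; apply: ge_sup => // _ [y ->].
  have Ey : E x' (u y - mdist x' y) by exists y.
  have := sup_upper_bound (Es x') Ey.
  have := metric_triangle x' x y; rewrite (metric_sym x' x).
  rewrite /hs; lra.
have hlip : forall x y, `|hs x - hs y| <= mdist x y.
  move=> x y; rewrite ler_norml; have := hl x y; have := hl y x.
  rewrite (metric_sym y x); lra.
have ahu : asym hs u.
  move=> e e0; have e20 : 0 < e / 2 by rewrite divr_gt0.
  have [K [n [[Kb Ks] Kc]]] := gu _ e20.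
  have [i [_ hi]] := Ks _ _ (@mbounded0 _ X) ltr01.
  have [b Hb] := Kb i.
  pose N1 := [set x | exists y, K i y /\ mdist x y <= 1].
  have bN1 : mbounded N1.
    exists (1 + b + 1) => x x' [y [Ky hy]] [y' [Ky' hy']].
    have := metric_triangle x y x'; have := metric_triangle y y' x'.
    have := Hb _ _ Ky Ky'; rewrite (metric_sym y' x'); lra.
  apply: mboundedS bN1 => x /= hx.
  have [//|nN1] := pselect (N1 x).
  have hxK : ~ K i x by move=> Kx; apply: nN1; exists x; rewrite mdistxx ler01.
  have : hs x <= u x + e / 2.
    apply: ge_sup => // _ [y ->].
    have := mdist_ge0 x y; have := ub x; have := ub y.
    move=> /andP[uy0 uy1] /andP[ux0 ux1] dxy.
    case: (leP (mdist x y) 1) => dy.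
      have hyK : ~ K i y by move=> Ky; apply: nN1; exists y.
      have hc : scale_chain K n x [:: y].
        split => //; exists i; split => //; split => //.
        apply: (le_trans dy); exact: ltW.
      have := Kc _ _ hc; rewrite /= => hlt.
      have := ler_norm (u y - u x); rewrite distrC; lra.
    lra.
  move: hx; have := hu x; rewrite ger0_norm; last by have := hu x; lra.
  lra.
have cg : cgo_fun hs.
  split; first exact: lip_continuous.
  split; first by move=> x; have := hu x; have := h1 x; have := ub x; move=> /andP[? ?] ? ?; apply/andP; split; lra.
  exact: go_asym gu ahu.
by exists (exist _ hs cg).
Qed.

Lemma max0_lip (a b : R) : `|Num.max 0 a - Num.max 0 b| <= `|a - b|.
Proof.
have h1 := ler_norm (a - b).
have h2 : - (a - b) <= `|a - b| by rewrite -normrN ler_norm.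
rewrite ler_norml.
case: (leP 0 a) => ha; case: (leP 0 b) => hb;
apply/andP; split; lra.
Qed.

Lemma bump_fun (Y : metricType R) (y0 : Y) :
  exists phi : CGO Y, proj1_sig phi y0 = 1 /\
    forall y, 1 <= mdist y0 y -> proj1_sig phi y = 0.
Proof.
pose b y := Num.max 0 (1 - mdist y0 y).
have b0 : forall y, 1 <= mdist y0 y -> b y = 0.
  by move=> y hy; rewrite /b max_l // subr_le0.
have cg : cgo_fun b.
  split.
    apply: lip_continuous => x y.
    apply: (le_trans (max0_lip _ _)).
    have := metric_triangle y0 x y; have := metric_triangle y0 y x.
    rewrite (metric_sym y x) ler_norml => ? ?; apply/andP; split; lra.
  split.
    move=> y; rewrite /b le_max lexx /= ge_max ler01 /=.
    by have := mdist_ge0 y0 y; lra.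
  apply: (go_asym (go_cst y0 0)) => e e0.
  apply/(bounded_ballP y0); exists 1 => y /=; rewrite subr0 => hy.
  case: (leP (mdist y0 y) 1) => // h.
  by move: hy; rewrite b0 ?normr0 ?(ltW h) // leNgt e0.
exists (exist _ b cg); split => //=.
by rewrite /b mdistxx subr0 max_r // ler01.
Qed.

End approx.

Section topo.
Variable R : realType.

Lemma ptws_cvgP (I : Type) (F : set_system {ptws I -> R}) (f : {ptws I -> R}) :
  Filter F -> F --> f <-> forall i, (fun g => g i) @ F --> f i.
Proof.
move=> FF.
have := @cvg_sup _ _ (fun i => Topological.class
    (initial_topology (fun g : (forall i : I, R) => g i))) F f FF.
move=> ->.
have surj : forall i, (fun g : I -> R => g i) @` setT = setT.
  by move=> i; apply/seteqP; split => // r _; exists (fun _ => r).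
split => H i.
  move: (H i); rewrite (@cvg_image _ _ _ F f FF (surj i)) => C.
  move=> B /C [A FA AB].
  have sA : A `<=` (fun g : I -> R => g i) @^-1` B by move=> g Ag; rewrite -AB; exists g.
  exact: (filterS sA FA).
apply/(@cvg_image _ _ _ F f FF (surj i)) => B /(H i) FB.
exists ((fun g : I -> R => g i) @^-1` B) => //; exact: image_preimage.
Qed.

Lemma ptws_hausdorff (I : Type) : hausdorff_space {ptws I -> R}.
Proof.
move=> p q; rewrite cluster_cvgE /= => -[G PG [GtoQ psubG]].
apply: functional_extensionality_dep => i.
have c1 := (ptws_cvgP q (@filter_filter _ _ PG)).1 GtoQ i.
have c2 := (ptws_cvgP p (@filter_filter _ _ PG)).1 psubG i.
exact: (cvg_unique (@Rhausdorff R) c2 c1).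
Qed.

Lemma embed_continuous (X : metricType R) : continuous (@cf_embed R X).
Proof.
move=> x; apply/ptws_cvgP => a.
exact: (proj1 (proj2_sig a) x).
Qed.

Lemma corona_escape (X : metricType R) (p : {ptws CGO X -> R}) N B :
  proper_metric X -> CF_corona X p -> nbhs p N -> mbounded B ->
  exists x, N (cf_embed x) /\ ~ B x.
Proof.
move=> pX [cl nr] Np bB.
have [_ [[x1 _ <-] _]] := cl N Np.
have [r Hr] := (bounded_ballP x1 B).1 bB.
pose C := [set y | mdist x1 y <= r].
have cC : compact ((@cf_embed R X) @` C).
  apply: continuous_compact; last exact: pX.
  exact: continuous_subspaceT (@embed_continuous X).
have [//|H] := pselect (exists x, N (cf_embed x) /\ ~ B x).
exfalso; apply: nr.
have : ((@cf_embed R X) @` C) p.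
  apply: (compact_closed (@ptws_hausdorff _) cC) => M Mp.
  have NM : nbhs p (N `&` M) by apply: filterI.
  have [_ [[x _ <-] [Nx Mx]]] := cl _ NM.
  have Bx : B x.
    by have [//|nB] := pselect (B x); exfalso; apply: H; exists x.
  exists (cf_embed x); split => //; exists x => //; exact: Hr.
by move=> [y _ <-]; exists y.
Qed.

Definition cfilt (X : metricType R) (p : {ptws CGO X -> R}) : set_system X :=
  fun A => exists N, nbhs p N /\ exists B, mbounded B /\
    (forall x, N (cf_embed x) -> ~ B x -> A x).

Lemma cfilt_filter (X : metricType R) (p : {ptws CGO X -> R}) : Filter (cfilt p).
Proof.
apply: Build_Filter.
- exists setT; split; first exact: filterT.
  by exists set0; split; [exact: mbounded0|].
- move=> A1 A2 [N1 [N1p [B1 [bB1 H1]]]] [N2 [N2p [B2 [bB2 H2]]]].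
  exists (N1 `&` N2); split; first exact: filterI.
  exists (B1 `|` B2); split; first exact: mboundedU.
  move=> x [n1 n2] nB; split.
    by apply: H1 => // hB; apply: nB; left.
  by apply: H2 => // hB; apply: nB; right.
- move=> A1 A2 A12 [N [Np [B [bB H]]]]; exists N; split => //.
  by exists B; split => // x n nb; apply: A12; apply: H.
Qed.

Lemma cfilt_proper (X : metricType R) (p : {ptws CGO X -> R}) :
  proper_metric X -> CF_corona X p -> ProperFilter (cfilt p).
Proof.
move=> pX cp; apply: Build_ProperFilter_ex; last exact: cfilt_filter.
move=> A [N [Np [B [bB H]]]].
have [x [Nx nBx]] := corona_escape pX cp Np bB.
by exists x; apply: H.
Qed.

Lemma cfilt_cob (X : metricType R) (p : {ptws CGO X -> R}) B :
  mbounded B -> cfilt p (~` B).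
Proof.
move=> bB; exists setT; split; first exact: filterT.
by exists B; split.
Qed.

Lemma cfilt_cvg (X : metricType R) (p : {ptws CGO X -> R}) (a : CGO X) :
  proj1_sig a @ cfilt p --> p a.
Proof.
move=> V Vp.
have c := (ptws_cvgP p (@nbhs_filter _ p)).1 (@cvg_id _ (nbhs p)) a.
have NV := c _ Vp.
exists ((fun g => g a) @^-1` V); split => //.
by exists set0; split; [exact: mbounded0|].
Qed.

End topo.

Section transfer.
Variable R : realType.

Definition tr (X Y : metricType R) (H : CGO Y -> CGO X)
  (q : {ptws CGO X -> R}) : {ptws CGO Y -> R} := fun phi => q (H phi).

Lemma tr_cont (X Y : metricType R) (H : CGO Y -> CGO X) : continuous (tr H).
Proof.
move=> q.
have hc := (@ptws_cvgP _ (CGO X) (nbhs q) q (@nbhs_filter _ q)).1 (@cvg_id _ (nbhs q)).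
apply: (proj2 (@ptws_cvgP _ (CGO Y) (tr H @ nbhs q) (tr H q) _)) => phi.
exact: (hc (H phi)).
Qed.

Lemma corona_of_filter (Y : metricType R) (G : set_system Y) (q : {ptws CGO Y -> R}) :
  ProperFilter G -> (forall B, mbounded B -> G (~` B)) ->
  (forall phi : CGO Y, proj1_sig phi @ G --> q phi) -> CF_corona Y q.
Proof.
move=> PG cob Hc; split.
  move=> N Nq.
  have ce : (@cf_embed R Y) @ G --> q by apply/ptws_cvgP => phi; exact: Hc.
  have GN : G ((@cf_embed R Y) @^-1` N) := ce _ Nq.
  have [y Ny] := filter_ex GN.
  by exists (cf_embed y); split => //; exists y.
move=> [y0 _ qe].
have [phi [p1 p0]] := bump_fun y0.
have c1 : proj1_sig phi @ G --> (1 : R).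
  by have := Hc phi; rewrite -qe /cf_embed p1.
have c0 : proj1_sig phi @ G --> (0 : R).
  apply: cvg_near_cst.
  have bd : mbounded [set y | mdist y0 y < 1].
    by apply/(bounded_ballP y0); exists 1 => y /= /ltW.
  apply: filterS (cob _ bd) => y /= ny; apply: p0.
  by rewrite leNgt; apply/negP.
have := cvg_unique (@Rhausdorff R) c1 c0.
move=> h; have := @oner_eq0 R; by rewrite h eqxx.
Qed.

Lemma transfer_corona (X Y : metricType R) (f : X -> Y) (H : CGO Y -> CGO X)
  (p : {ptws CGO X -> R}) :
  proper_metric X -> coarse_map f ->
  (forall phi, asym (proj1_sig (H phi)) (proj1_sig phi \o f)) ->
  CF_corona X p -> CF_corona Y (tr H p).
Proof.
move=> pX cf HP cp.
have PF := cfilt_proper pX cp.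
apply: (@corona_of_filter _ (f @ cfilt p)).
- by move=> B bB; exact: (cfilt_cob p (cf _ bB)).
- move=> phi.
  change ((proj1_sig phi \o f) @ cfilt p --> p (H phi)).
  have h := (asym_cvg (@cfilt_filter _ _ p) (@cfilt_cob _ _ p) (HP phi) (@cfilt_cvg _ _ p (H phi))).
  exact: h.
Qed.

Lemma transfer_inv (X Y : metricType R) (f : X -> Y) (g : Y -> X)
  (Hf : CGO Y -> CGO X) (Hg : CGO X -> CGO Y) (p : {ptws CGO X -> R}) :
  proper_metric X -> coarse_map f -> coarse_map g ->
  close_maps (g \o f) idfun ->
  (forall phi, asym (proj1_sig (Hf phi)) (proj1_sig phi \o f)) ->
  (forall psi, asym (proj1_sig (Hg psi)) (proj1_sig psi \o g)) ->
  CF_corona X p -> tr Hg (tr Hf p) = p.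
Proof.
move=> pX cf cg cl HfP HgP cp.
have PF := cfilt_proper pX cp.
apply: functional_extensionality_dep => psi; rewrite /tr.
have a1 := HfP (Hg psi).
have a2 := asym_comp cf (HgP psi).
have a3 := close_asym (proj2 (proj2 (proj2_sig psi))) (coarse_comp cf cg) cl.
have a := asym_trans (asym_trans a1 a2) a3.
have c1 := asym_cvg (@cfilt_filter _ _ p) (@cfilt_cob _ _ p) a (@cfilt_cvg _ _ p (Hf (Hg psi))).
have c2 := @cfilt_cvg _ _ p psi.
exact: (cvg_unique (@Rhausdorff R) c1 c2).
Qed.

Lemma exists_H (X Y : metricType R) (f : X -> Y) :
  coarse_map f -> ls_continuous f ->
  exists H : CGO Y -> CGO X, forall phi, asym (proj1_sig (H phi)) (proj1_sig phi \o f).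
Proof.
move=> cf lf.
have : forall phi : CGO Y, exists h : CGO X, asym (proj1_sig h) (proj1_sig phi \o f).
  move=> phi; have [_ [b g]] := proj2_sig phi.
  apply: (@approx _ X (proj1_sig phi \o f)); first by move=> x; exact: b.
  exact: go_comp.
by move=> /choice [H HP]; exists H.
Qed.

End transfer.

Theorem proposition4p6 (R : realType) (X Y : metricType R) :
  proper_metric X -> proper_metric Y -> coarsely_equivalent X Y ->
  homeomorphic_sets (CF_corona X) (CF_corona Y).
Proof.
move=> pX pY [f [g [[cf lf cg lg] [cgf cfg]]]].
have [Hf HfP] := exists_H cf lf.
have [Hg HgP] := exists_H cg lg.
exists (tr Hf), (tr Hg); split; [split|split].
- by move=> _ [p cp <-]; exact: transfer_corona pX cf HfP cp.
- by move=> _ [q cq <-]; exact: transfer_corona pY cg HgP cq.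
- move=> p; rewrite inE => cp; exact: transfer_inv pX cf cg cgf HfP HgP cp.
- move=> q; rewrite inE => cq; exact: transfer_inv pY cg cf cfg HgP HfP cq.
- exact: (@continuous_subspaceT _ _ (CF_corona X) (tr Hf) (@tr_cont _ X Y Hf)).
- exact: (@continuous_subspaceT _ _ (CF_corona Y) (tr Hg) (@tr_cont _ Y X Hg)).
Qed.
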